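(* Consider $\mathrm{USD}_1$ (stubbornness $p=1$) started from the configuration with $u(0)=0$, $x_1(0)=1$ and $x_2(0)=n-1$. Let $T_1 := \inf\{t \geq 0 : x_2(t) = 0\}$. Then $\Pr[T_1 \leq 7n^2\log^2 n] \geq 1-n^{-2}$.
   Context: Population protocol with $n$ agents, each in a state from $\{1,2,\bot\}$ (Opinion 1, Opinion 2, undecided). At each time step a scheduler picks an ordered pair $(i,j)$ of agents uniformly at random, independently of the past; only the initiator $i$ changes state. In $\mathrm{USD}_p$: if the initiator is $2$ and the responder $1$, the initiator becomes $\bot$; if the initiator is $1$ and the responder $2$, the initiator becomes $\bot$ with probability $1-p$ and otherwise stays $1$ (so for $p=1$ it always stays $1$); if the initiator is $\bot$, it adopts the responder's state; otherwise nothing changes. $x_1(t),x_2(t),u(t)$ are the numbers of agents in states $1,2,\bot$ after $t$ interactions. *)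

(* Defs.v *)
From HB Require Import structures.
From mathcomp Require Import all_boot all_order all_algebra.
From mathcomp Require Import reals exp.
Set Implicit Arguments. Unset Strict Implicit. Unset Printing Implicit Defensive.
Import Order.TTheory GRing.Theory Num.Theory.
Local Open Scope ring_scope.

(* Agent states: Some true = opinion 1, Some false = opinion 2, None = undecided (bot). *)
Definition st := option bool.
Definition op1 : st := Some true.
Definition op2 : st := Some false.
Definition undec : st := None.

Definition config (n : nat) := {ffun 'I_n -> st}.

Definition count_st (n : nat) (s : st) (c : config n) : nat := #|[set k | c k == s]|.

Definition upd (n : nat) (c : config n) (i : 'I_n) (s : st) : config n :=
  [ffun k => if k == i then s else c k].

(* USD_p: distribution (list of (probability, new state)) of the initiator's
   new state, given initiator state a and responder state b. *)
Definition usd_out {R : realType} (p : R) (a b : st) : seq (R * st) :=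
  match a, b with
  | Some false, Some true => [:: (1, None)]
  | Some true, Some false => [:: (p, Some true); (1 - p, None)]
  | None, _ => [:: (1, b)]
  | _, _ => [:: (1, a)]
  end.

(* hitP p k c = Pr[ T <= k ] where T = inf { t >= 0 : x_2(t) = 0 }, for the
   USD_p chain started from configuration c.  At each step an ordered pair
   (i, j) of distinct agents is chosen uniformly at random (probability
   1/(n(n-1))), and the initiator i updates according to usd_out. *)
Fixpoint hitP {R : realType} (p : R) (n : nat) (k : nat) (c : config n) : R :=
  if count_st op2 c == 0%N then 1
  else match k with
       | 0 => 0
       | k'.+1 =>
           \sum_(i : 'I_n) \sum_(j : 'I_n | j != i)
             ((n * (n - 1))%:R)^-1 *
             \sum_(o <- usd_out p (c i) (c j)) o.1 * hitP p k' (upd c i o.2)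
       end.

(* Main.v *)
Require Import Defs.
From HB Require Import structures.
From mathcomp Require Import all_boot all_order all_algebra.
From mathcomp Require Import reals exp.
From mathcomp Require Import sequences.
From mathcomp.algebra_tactics Require Import ring lra.
From mathcomp Require Import zify.
Import Order.TTheory GRing.Theory Num.Theory.
Local Open Scope ring_scope.


Lemma cnt_upd n (c : config n) i s t :
  (count_st t (upd c i s) + (c i == t))%N = (count_st t c + (s == t))%N.
Proof.
rewrite /count_st (cardD1 i [set k | c k == t]) (cardD1 i [set k | upd c i s k == t]).
rewrite !inE /upd ffunE eqxx.
have -> : #|[predD1 [set k | [ffun k => if k == i then s else c k] k == t] & i]|
        = #|[predD1 [set k | c k == t] & i]|.
  apply: eq_card => k; rewrite !inE ffunE.
  by case: (k =P i).
by rewrite [LHS]addnAC [RHS]addnAC [in RHS](addnC (c i == t)).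
Qed.

Lemma upd_id n (c : config n) i : upd c i (c i) = c.
Proof. by apply/ffunP => k; rewrite ffunE; case: (k =P i) => // ->. Qed.

Definition E3 {R : numDomainType} {n} (c : config n) (G : st -> R) : R :=
  (count_st op1 c)%:R * G op1 + (count_st op2 c)%:R * G op2 + (count_st undec c)%:R * G undec.

Lemma sum_ind {R : numDomainType} {n} (c : config n) (s : st) :
  \sum_(j : 'I_n) ((c j == s)%:R : R) = (count_st s c)%:R.
Proof.
rewrite /count_st -sum1_card natr_sum [RHS]big_mkcond /=.
by apply: eq_bigr => j _; rewrite inE; case: (c j == s).
Qed.

Lemma sum_dec {R : numDomainType} {n} (c : config n) (G : st -> R) :
  \sum_(j : 'I_n) G (c j) = E3 c G.
Proof.
rewrite /E3 -!sum_ind !mulr_suml -!big_split /=.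
apply: eq_bigr => j _.
by case: (c j) => [[]|] /=; rewrite /op1 /op2 /undec /=; ring.
Qed.

Lemma cnt_tot n (c : config n) :
  (count_st op1 c + count_st op2 c + count_st undec c)%N = n.
Proof.
have := sum_dec (R := rat) c (fun _ => 1).
rewrite sumr_const card_ord /E3 !mulr1 -!natrD => /eqP.
by rewrite eqr_nat => /eqP.
Qed.

Lemma pair_sum {R : numDomainType} {n} (c : config n) (F : st -> st -> R) :
  \sum_(i : 'I_n) \sum_(j : 'I_n | j != i) F (c i) (c j)
  = E3 c (fun x => E3 c (F x) - F x x).
Proof.
rewrite -sum_dec; apply: eq_bigr => i _.
by rewrite -sum_dec [in RHS](bigD1 i) //= addrAC subrr add0r.
Qed.



Definition Hs {R : realType} (n : nat) : R := \sum_(1 <= j < n) (j%:R)^-1.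
Definition Af {R : realType} (n a : nat) : R :=
  (n - a)%:R + (n.-1)%:R * \sum_(a <= j < n) (j%:R)^-1.
Definition Vc {R : realType} {n} (c : config n) : R :=
  Af n (count_st op1 c) - (count_st undec c)%:R.
Definition Wc {R : realType} {n} (c : config n) : R :=
  if count_st op2 c == 0%N then 0 else Vc c.
Definition lam {R : realType} (n : nat) : R := 1 - ((n * n.-1)%:R * (1 + Hs n))^-1.
Definition ev {R : realType} {n} (c : config n) (x y : st) : R :=
  Vc c + match x, y with
         | Some false, Some true => -1
         | None, Some true => 1 - (Af n (count_st op1 c) - Af n (count_st op1 c).+1)
         | None, Some false => 1
         | _, _ => 0 end.

Lemma sumS_ge0 {R : realType} (a n : nat) : 0 <= \sum_(a <= j < n) ((j%:R : R)^-1).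
Proof. by apply: sumr_ge0 => j _; rewrite invr_ge0 ler0n. Qed.

Lemma Af_ge {R : realType} n a : (n - a)%:R <= (Af n a : R).
Proof. by rewrite /Af lerDl mulr_ge0 ?ler0n ?sumS_ge0. Qed.

Lemma W_le_V {R : realType} n (c : config n) : Wc c <= (Vc c : R).
Proof.
rewrite /Wc; case: ifP => // _.
rewrite /Vc subr_ge0 (le_trans _ (Af_ge _ _)) // ler_nat.
have := cnt_tot _ c; lia.
Qed.

Lemma Af_step {R : realType} n a : (0 < a < n)%N ->
  Af n a = Af n a.+1 + 1 + (n.-1)%:R / (a%:R : R).
Proof.
move=> /andP [a0 an].
rewrite /Af (big_ltn an) subnS.
have h : (n - a)%:R = ((n - a).-1)%:R + 1 :> R by rewrite natr1 prednK // subn_gt0.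
rewrite h; ring.
Qed.

Lemma cnt_updR {R : realType} n (c : config n) i s t :
  ((count_st t (upd c i s))%:R : R) = (count_st t c)%:R + (s == t)%:R - (c i == t)%:R.
Proof. by rewrite -natrD -(cnt_upd _ c i s t) natrD addrK. Qed.

Lemma upd_same n (c : config n) i s : c i = s -> upd c i s = c.
Proof. by move=> <-; exact: upd_id. Qed.

Lemma pair_bound {R : realType} n (c : config n) k
  (IH : forall c' : config n, (1 <= count_st op1 c')%N ->
          1 - lam n ^+ k * Wc c' / 2 <= hitP (1:R) k c')
  (ha : (1 <= count_st op1 c)%N) (hb : count_st op2 c != 0%N)
  (hl : 0 <= lam n :> R) i j :
  1 - lam n ^+ k * ev c (c i) (c j) / 2 <=
  \sum_(o <- usd_out (1:R) (c i) (c j)) o.1 * hitP 1 k (upd c i o.2).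
Proof.
have key : forall (c' : config n) (e : R), (1 <= count_st op1 c')%N -> Wc c' <= e ->
    1 - lam n ^+ k * e / 2 <= hitP (1:R) k c'.
  move=> c' e h1 hW; apply: le_trans (IH c' h1).
  rewrite lerD2l lerN2; apply: ler_wpM2r; first by rewrite invr_ge0 ler0n.
  by apply: ler_wpM2l => //; exact: exprn_ge0.
have WV : Wc c = Vc c :> R by rewrite /Wc (negbTE hb).
case Ei: (c i) => [[]|]; case Ej: (c j) => [[]|];
  rewrite /= !big_cons big_nil /= ?subrr ?mul0r ?mul1r ?addr0.
all: try (rewrite upd_same //; apply: key => //; rewrite WV /ev /=; lra).
- have := cnt_upd _ c i None op1; rewrite Ei /= !addn0 => Ea.
  apply: key; first by rewrite Ea.
  apply: le_trans (W_le_V _ _) _.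
  rewrite /ev /Vc Ea (cnt_updR _ c i None undec) Ei /=; lra.
- have := cnt_upd _ c i (Some true) op1; rewrite Ei /= !addn0 addn1 => Ea.
  apply: key; first by rewrite Ea.
  apply: le_trans (W_le_V _ _) _.
  rewrite /ev /Vc Ea (cnt_updR _ c i (Some true) undec) Ei /=; lra.
- have := cnt_upd _ c i (Some false) op1; rewrite Ei /= !addn0 => Ea.
  apply: key; first by rewrite Ea.
  apply: le_trans (W_le_V _ _) _.
  rewrite /ev /Vc Ea (cnt_updR _ c i (Some false) undec) Ei /=; lra.
Qed.

Lemma hitP_S {R : realType} (p : R) n k (c : config n) :
  hitP p k.+1 c = if count_st op2 c == 0%N then 1 else
    \sum_(i : 'I_n) \sum_(j : 'I_n | j != i)
             ((n * (n - 1))%:R)^-1 *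
             \sum_(o <- usd_out p (c i) (c j)) o.1 * hitP p k (upd c i o.2).
Proof. by []. Qed.

Lemma hitP_0 {R : realType} (p : R) n (c : config n) :
  hitP p 0 c = if count_st op2 c == 0%N then 1 else 0.
Proof. by []. Qed.

Lemma Hs_ge0 {R : realType} n : 0 <= Hs n :> R.
Proof. exact: sumS_ge0. Qed.

Lemma S_le_H {R : realType} n a : (1 <= a)%N ->
  \sum_(a <= j < n) ((j%:R : R)^-1) <= Hs n.
Proof.
move=> a1; rewrite /Hs; case: (leqP a n) => an.
  by rewrite (big_cat_nat a1 an) /= lerDr sumS_ge0.
by rewrite big_geq ?sumS_ge0 // ltnW.
Qed.

Lemma V_ge2 {R : realType} n (c : config n) :
  (1 <= count_st op1 c)%N -> count_st op2 c != 0%N -> 2 <= (Vc c : R).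
Proof.
move=> ha hb; have tot := cnt_tot _ c.
set a := count_st op1 c in ha tot *; set u := count_st undec c in tot *.
have an : (a <= n.-1)%N by move: hb; lia.
have n1 : (1 <= n.-1)%N by lia.
rewrite /Vc /Af -/a -/u.
rewrite (big_cat_nat (n := n.-1) an) /=; last by lia.
have -> : n = n.-1.+1 by lia.
rewrite big_nat1 /=.
have h1 : (n.-1%:R : R) * (n.-1%:R)^-1 = 1 by rewrite divff // pnatr_eq0 -lt0n.
have h2 : (u%:R : R) + 1 <= (n.-1.+1 - a)%:R by rewrite natr1 ler_nat; lia.
have h3 := sumS_ge0 (R := R) a n.-1.
have h4 : (0 : R) <= n.-1%:R by rewrite ler0n.
have h5 := mulr_ge0 h4 h3.
rewrite mulrDr h1; lra.
Qed.

Lemma lam_ge0 {R : realType} n : (2 <= n)%N -> 0 <= lam n :> R.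
Proof.
move=> n2; rewrite /lam subr_ge0.
have h1 : (1 : R) <= (n * n.-1)%:R by rewrite ler1n muln_gt0; apply/andP; split; lia.
have h2 := Hs_ge0 (R := R) n.
rewrite invf_le1; first by nra.
have : (0 : R) < (n * n.-1)%:R by lra.
move=> h; apply: mulr_gt0 => //; lra.
Qed.

Lemma main_ind {R : realType} n (n2 : (2 <= n)%N) k : forall c : config n,
  (1 <= count_st op1 c)%N -> 1 - lam n ^+ k * Wc c / 2 <= hitP (1:R) k c.
Proof.
have hl := lam_ge0 (R := R) _ n2.
elim: k => [|k IH] c ha.
  rewrite hitP_0 /Wc; case: ifP => hb; first by rewrite mulr0 mul0r subr0.
  have := V_ge2 (R := R) _ _ ha (negbT hb); rewrite expr0 mul1r; lra.
rewrite hitP_S /Wc; case: ifP => hb; first by rewrite mulr0 mul0r subr0.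
have hb' := negbT hb.
set mi := ((n * (n - 1))%:R : R)^-1.
apply: (@le_trans _ _ (\sum_(i : 'I_n) \sum_(j : 'I_n | j != i)
   mi * (1 - lam n ^+ k * ev c (c i) (c j) / 2))); last first.
  apply: ler_sum => i _; apply: ler_sum => j _; apply: ler_wpM2l.
    by rewrite /mi invr_ge0 ler0n.
  exact: pair_bound.
rewrite (pair_sum c (fun x y => mi * (1 - lam n ^+ k * ev c x y / 2))).
have L0 := exprn_ge0 k hl.
have tot := cnt_tot _ c.
have an : (count_st op1 c < n)%N by move: hb'; lia.
have step := Af_step (R := R) n (count_st op1 c); rewrite ha an /= in step.
have {}step := step isT.
have VA : Vc c = Af n (count_st op1 c) - (count_st undec c)%:R :> R by [].
have e1 : (n - count_st op1 c = count_st op2 c + count_st undec c)%N by lia.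
have AS : Af n (count_st op1 c) = (count_st op2 c)%:R + (count_st undec c)%:R
     + (n.-1)%:R * \sum_(count_st op1 c <= j < n) ((j%:R : R)^-1) by rewrite /Af e1 natrD.
have SH := S_le_H (R := R) n _ ha.
have S0 := sumS_ge0 (R := R) (count_st op1 c) n.
have H0 := Hs_ge0 (R := R) n.
have ha1 : (1 : R) <= (count_st op1 c)%:R by rewrite ler1n.
have hb2 : (1 : R) <= (count_st op2 c)%:R by rewrite ler1n lt0n.
have uu : ((count_st undec c)%:R : R) <= (count_st undec c)%:R ^+ 2.
  by rewrite -natrX ler_nat; case: (count_st undec c) => // u'; rewrite expnS leq_pmulr.
have nR : (n%:R : R) = (count_st op1 c)%:R + (count_st op2 c)%:R + (count_st undec c)%:R.
  by rewrite -!natrD tot.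
have n1R : (n.-1%:R : R) = n%:R - 1 by rewrite -subn1 natrB // ltnW.
have n1R' : ((n - 1)%:R : R) = n%:R - 1 by rewrite natrB // ltnW.
rewrite /mi natrM n1R'.
rewrite /lam natrM n1R in hl.
rewrite /E3 /ev /= [lam n ^+ k.+1]exprS.
move: step VA AS SH S0 H0 ha1 hb2 uu nR hl L0.
set a := count_st op1 c; set b := count_st op2 c; set u := count_st undec c.
set S := \sum_(a <= j < _) _. set V := Vc c. set A0 := Af _ a. set A1 := Af _ a.+1.
set L := lam _ ^+ k.
rewrite /lam natrM n1R.
set H := Hs _.
move=> step VA AS SH S0 H0 ha1 hb2 uu nR hl L0.
rewrite nR in step hl *.
set ar := a%:R in step VA AS ha1 uu nR hl *.
set br := b%:R in step VA AS ha1 hb2 uu nR hl *.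
set ur := u%:R in step VA AS ha1 hb2 uu nR hl *.
set m := (ar + br + ur) * (ar + br + ur - 1).
have ur0 : 0 <= ur by rewrite ler0n.
have s2 : 2 <= ar + br + ur by lra.
have m0 : 0 < m by rewrite /m; nra.
have a0 : ar != 0 by apply/eqP; lra.
have m0' : m != 0 by apply/eqP; lra.
set X := ar * br + ur * (ar + br + ur - 1) - ur * br.
have K : V <= (1 + H) * X.
  have h1 : 0 <= (ar - 1) * (br + ur - 1) by nra.
  have h2 : 0 <= H * ((ar - 1) * (br + ur - 1)) by nra.
  have h3 : 0 <= (ar + br + ur - 1) * (H - S) by nra.
  have h4 : 0 <= (1 + H) * (ur ^+ 2 - ur) by nra.
  have h5 : 0 <= (ar - 1) * (br + ur) by nra.
  rewrite /X VA AS; nra.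
apply: (@le_trans _ _ (1 - L * V / 2 + m^-1 * (L / 2) * X)).
  rewrite -/m invfM.
  have hv : V / (1 + H) <= X by rewrite ler_pdivrMr; lra.
  have P : 0 <= m^-1 * L * (X - V / (1 + H)).
    apply: mulr_ge0; last lra.
    by apply: mulr_ge0 => //; rewrite invr_ge0 ltW.
  lra.
rewrite le_eqVlt; apply/orP; left; apply/eqP.
rewrite /X /m step; field.
rewrite -/ar -/br -/ur; apply/and3P; split; apply/eqP; lra.
Qed.



Lemma exp_harm {R : realType} (N : nat) : (1 <= N)%N ->
  (N%:R : R) <= expR (\sum_(1 <= j < N) (j%:R)^-1).
Proof.
elim: N => [//|N IH] _.
case: N IH => [|N] IH; first by rewrite big_geq // expR0.
rewrite big_nat_recr //= expRD.
have h1 := IH isT.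
have h2 := expR_ge1Dx (R := R) (N.+1%:R)^-1.
have h3 : (N.+2%:R : R) = N.+1%:R * (1 + (N.+1%:R)^-1).
  by rewrite mulrDr mulr1 mulfV ?pnatr_eq0 // -natr1.
rewrite h3; apply: ler_pM => //; last first.
by rewrite addr_ge0 // invr_ge0 ler0n.
Qed.

Lemma exp_harm2 {R : realType} (N : nat) : (2 <= N)%N ->
  expR (\sum_(3 <= i < N.+1) ((i%:R : R)^-1)) <= N%:R / 2.
Proof.
elim: N => [//|N IH] hN.
case: (ltngtP N 1) => hN1; first by lia.
  rewrite big_nat_recr //= expRD.
  have h1 := IH hN1.
  have e0 : (0 : R) < N%:R by rewrite ltr0n; lia.
  have h2 : expR ((N.+1%:R : R)^-1) <= N.+1%:R / N%:R.
    have h := expR_ge1Dx (R := R) (- (N.+1%:R)^-1).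
    set x := (N.+1%:R : R)^-1 in h *.
    rewrite expRN in h.
    have ep := expR_gt0 x.
    have hx : x * (N.+1%:R) = 1 by rewrite mulVf // pnatr_eq0.
    have := ler_wpM2r (ltW ep) h; rewrite mulVf ?gt_eqF // => h'.
    rewrite ler_pdivlMr //.
    have NN : (N.+1%:R : R) = N%:R + 1 by rewrite natr1.
    rewrite NN in hx; nra.
  apply: le_trans (ler_pM (expR_ge0 _) (expR_ge0 _) h1 h2) _.
  rewrite le_eqVlt; apply/orP; left; apply/eqP; field.
  by rewrite pnatr_eq0; lia.
by rewrite hN1 big_geq // expR0; lra.
Qed.

Lemma pair_ineq {R : realType} (a b : R) : 0 < a -> 0 < b ->
  4 / (a + b) <= a^-1 + b^-1.
Proof.
move=> a0 b0.
have e : a^-1 + b^-1 - 4 / (a + b) = (a - b) ^+ 2 / (a * b * (a + b)).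
  by field; apply/and3P; split; apply/eqP; lra.
rewrite -subr_ge0 e; apply: divr_ge0; first exact: sqr_ge0.
by apply: mulr_ge0; [apply: mulr_ge0|]; lra.
Qed.

Lemma harm_mid {R : realType} (n : nat) : (1 <= n)%N ->
  2 * (n.+1%:R) / (3 * n%:R) <= \sum_(n <= j < (2 * n).+1) ((j%:R : R)^-1).
Proof.
move=> n1.
set T := \sum_(n <= j < (2 * n).+1) ((j%:R : R)^-1).
have rev : T = \sum_(n <= j < (2 * n).+1) (((3 * n - j)%:R : R)^-1).
  rewrite /T big_nat_rev /=; apply: eq_big_nat => j hj.
  by congr (_ ^-1); congr (_%:R); lia.
have h : \sum_(n <= j < (2 * n).+1) ((4 : R) / (3 * n%:R)) <= T + T.
  rewrite {2}rev -big_split /=; apply: ler_sum_nat => j /andP [h1 h2].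
  have -> : (3 * n%:R : R) = j%:R + (3 * n - j)%:R.
    by rewrite -natrD (_ : (j + (3 * n - j))%N = (3 * n)%N) ?natrM //; lia.
  apply: pair_ineq; rewrite ltr0n; lia.
rewrite sumr_const_nat in h.
have e : ((2 * n).+1 - n)%N = n.+1 by lia.
rewrite e in h.
have n0 : (0 : R) < n%:R by rewrite ltr0n.
move: h; rewrite -mulr_natr.
set s := n.+1%:R; set t := n%:R.
move=> h.
have : 4 / (3 * t) * s = 2 * (2 * s / (3 * t)) by field; lra.
lra.
Qed.



Definition Epoly {R : realType} (t H : R) : R :=
  let y := 1 + H in let q := 3 * t * H - 5 / 2 * t + 2 in
  7 * q ^+ 2 - 9 - 6 * (t - 1) * y * q - 9 * t * (t - 1) * y * (3 / 2 * H - 1 / 2) + 9 * t * y.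
Definition P1poly {R : realType} (t H : R) : R :=
  let y := 1 + H in let q := 3 * t * H - 5 / 2 * t + 2 in 7 / 3 * q - (t - 1) * y.

Lemma Hs13 {R : realType} : 31 / 10 <= Hs 13 :> R.
Proof. rewrite /Hs unlock /=. lra. Qed.

Lemma Hs_mono {R : realType} m n : (1 <= m <= n)%N -> Hs m <= Hs n :> R.
Proof.
move=> /andP [m1 mn]; rewrite /Hs (big_cat_nat m1 mn) /= lerDl.
exact: sumS_ge0.
Qed.

Lemma polys {R : realType} n : (2 <= n)%N ->
  0 <= Epoly (n%:R : R) (Hs n) /\ 0 <= P1poly (n%:R : R) (Hs n).
Proof.
move=> n2; case: (leqP 13 n) => hn.
  have hH : 31 / 10 <= Hs n :> R by apply: le_trans Hs13 (Hs_mono _ _ _); lia.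
  have ht : 13 <= (n%:R : R) by rewrite ler_nat.
  rewrite /Epoly /P1poly.
  set H := Hs n in hH *. set t := n%:R in ht *.
  have s0 : 0 <= t - 13 by lra.
  have h0 : 0 <= H - 31/10 by lra.
  have p1 := mulr_ge0 s0 h0.
  have p2 := mulr_ge0 s0 s0.
  have p3 := mulr_ge0 h0 h0.
  have p4 := mulr_ge0 p1 s0.
  have p5 := mulr_ge0 p1 h0.
  have p6 := mulr_ge0 p4 h0.
  split; nra.
case: n n2 hn => [|[|[|[|[|[|[|[|[|[|[|[|[|n]]]]]]]]]]]]] //= _ _;
  rewrite /Epoly /P1poly /Hs unlock /=; split; nra.
Qed.




Lemma final_num {R : realType} n k : (2 <= n)%N ->
  7 * (n%:R : R) ^+ 2 * (ln (n%:R : R)) ^+ 2 < k.+1%:R ->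
  lam n ^+ k * ((n - 1)%:R + (n.-1)%:R * Hs n) / 2 <= ((n%:R : R) ^+ 2)^-1.
Proof.
move=> n2 hk.
have [E0 P0] := polys (R := R) _ n2.
have n1R : (n.-1%:R : R) = n%:R - 1 by rewrite -subn1 natrB // ltnW.
have n1R' : ((n - 1)%:R : R) = n%:R - 1 by rewrite natrB // ltnW.
have hH1 : ((n - 1)%:R : R) <= expR (Hs n - ((n - 1)%:R)^-1).
  have := exp_harm (R := R) (n - 1) (_ : (1 <= n - 1)%N); rewrite /Hs.
  have -> : n = (n - 1).+1 by lia.
  rewrite big_nat_recr /=; last by lia.
  rewrite subSS subn0 addrK; apply; lia.
have hL : \sum_(3 <= i < (2 * n).+1) ((i%:R : R)^-1) <= ln (n%:R : R).
  have := exp_harm2 (R := R) (2 * n) (_ : (2 <= 2 * n)%N).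
  have e2 : ((2 * n)%:R : R) / 2 = n%:R by rewrite natrM; field.
  rewrite e2.
  have tp : (n%:R : R) \in Num.pos by rewrite qualifE /= ltr0n; lia.
  rewrite -{1}(lnK tp) ler_expR; apply; lia.
have hT := harm_mid (R := R) n (_ : (1 <= n)%N).
have hsplit : \sum_(3 <= i < (2 * n).+1) ((i%:R : R)^-1)
     = Hs n + \sum_(n <= j < (2 * n).+1) ((j%:R : R)^-1) - 3 / 2.
  have A : \sum_(1 <= i < (2 * n).+1) ((i%:R : R)^-1) = \sum_(1 <= i < 3) ((i%:R : R)^-1)
     + \sum_(3 <= i < (2 * n).+1) ((i%:R : R)^-1) by rewrite (big_cat_nat (n := 3)) //; lia.
  have B : \sum_(1 <= i < (2 * n).+1) ((i%:R : R)^-1) = \sum_(1 <= i < n) ((i%:R : R)^-1)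
     + \sum_(n <= i < (2 * n).+1) ((i%:R : R)^-1) by rewrite (big_cat_nat (n := n)) //; lia.
  have C : \sum_(1 <= i < 3) ((i%:R : R)^-1) = 3 / 2 by rewrite unlock /=; lra.
  rewrite /Hs; lra.
have {}hT := hT (ltnW n2).
have lam0 := lam_ge0 (R := R) _ n2.
have H0 := Hs_ge0 (R := R) n.
have lamE : lam n = 1 - ((n%:R * (n%:R - 1)) * (1 + Hs n))^-1 :> R by rewrite /lam natrM n1R.
rewrite n1R' n1R in hH1 *.
rewrite lamE in lam0 *.
rewrite -natr1 in hT hk.
move: hsplit hL hT.
set t := (n%:R : R) in hk E0 P0 hH1 lam0 *.
set H := Hs n in E0 P0 hH1 lam0 H0 *.
set L := ln t in hk *.
set T := \sum_(n <= j < _) _.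
set S3 := \sum_(3 <= i < _) _.
move=> hsplit hL hT.
have t2 : 2 <= t by rewrite /t ler_nat.
have l0 : H - 5 / 6 + 2 / (3 * t) <= L.
  have e : 2 * (t + 1) / (3 * t) = 2 / 3 + 2 / (3 * t) by field; lra.
  lra.
set l := H - 5 / 6 + 2 / (3 * t) in l0 *.
set x := (t * (t - 1) * (1 + H))^-1 in lam0 *.
have D0 : 0 < t * (t - 1) * (1 + H) by apply: mulr_gt0; [apply: mulr_gt0|]; lra.
have x0 : 0 < x by rewrite invr_gt0.
have P1 : 1 <= 7 * t ^+ 2 * x * l.
  have e : 7 * t ^+ 2 * x * l - 1 = P1poly t H / ((t - 1) * (1 + H)).
    rewrite /P1poly /x /l; field; apply/and3P; split; apply/eqP; lra.
  rewrite -subr_ge0 e; apply: divr_ge0 => //; apply: mulr_ge0; lra.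
have P2 : H - (t - 1)^-1 + (H - 1) / 2 <= (7 * t ^+ 2 * l ^+ 2 - 1) * x - 2 * l.
  have e : (7 * t ^+ 2 * l ^+ 2 - 1) * x - 2 * l - (H - (t - 1)^-1 + (H - 1) / 2)
         = Epoly t H / (9 * (t * (t - 1) * (1 + H))).
    rewrite /Epoly /x /l; field; apply/and3P; split; apply/eqP; lra.
  rewrite -subr_ge0 e; apply: divr_ge0 => //; lra.
have key : - (x * k%:R) + (H - (t - 1)^-1) + (H - 1) / 2 <= - (L * 2%:R).
  set A := 7 * t ^+ 2 * x.
  have A0 : 0 <= A by rewrite /A; apply: mulr_ge0; [apply: mulr_ge0; [lra|exact: sqr_ge0]|lra].
  have lpos : 0 <= l.
    case: (lerP 0 l) => // hl; have := mulr_ge0_le0 A0 (ltW hl); rewrite /A; lra.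
  have Ll : 0 <= L - l by lra.
  have h0 := mulr_ge0 A0 Ll.
  have h1 : 0 <= (L - l) * (A * (L + l) - 2) by apply: mulr_ge0 => //; rewrite /A in h0 *; nra.
  have h2 : x * (7 * t ^+ 2 * L ^+ 2 - 1) <= x * k%:R by apply: ler_wpM2l; lra.
  rewrite /A in h1 A0 P1; nra.
have hx : 1 - x <= expR (- x) by have := expR_ge1Dx (- x); lra.
have hlam : (1 - x) ^+ k <= expR (- (x * k%:R)).
  rewrite -mulNr expRM_natr; apply: lerXn2r => //; rewrite qualifE /=.
  exact: expR_ge0.
have hy : (1 + H) / 2 <= expR ((H - 1) / 2) by have := expR_ge1Dx ((H - 1) / 2); lra.
have tp : t \in Num.pos by rewrite qualifE /=; lra.
have tE : expR (- (L * 2%:R)) = (t ^+ 2)^-1 by rewrite expRN expRM_natr /L lnK.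
rewrite -tE.
apply: (@le_trans _ _ (expR (- (x * k%:R)) * expR (H - (t - 1)^-1) * expR ((H - 1) / 2))); last first.
  by rewrite -!expRD ler_expR.
have e : (1 - x) ^+ k * (t - 1 + (t - 1) * H) / 2 = (1 - x) ^+ k * (t - 1) * ((1 + H) / 2).
  by ring.
rewrite e; apply: ler_pM => //.
- by apply: mulr_ge0; [exact: exprn_ge0|lra].
- lra.
- apply: ler_pM => //; [exact: exprn_ge0|lra].
Qed.


(* k = floor(7 n^2 ln^2 n); hitP 1 k c = Pr[T_1 <= 7 n^2 ln^2 n] for USD_1. *)
Theorem lemma12 (R : realType) (n : nat) (c0 : config n) :
  (2 <= n)%N ->
  count_st op1 c0 = 1%N -> count_st op2 c0 = (n - 1)%N -> count_st undec c0 = 0%N ->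
  forall k : nat,
    (k%:R <= 7 * n%:R ^+ 2 * (ln (n%:R : R)) ^+ 2 < k.+1%:R) ->
    1 - (n%:R ^+ 2)^-1 <= hitP (1 : R) k c0.
Proof.
move=> n2 h1 h2 h3 k /andP [_ hk].
have ha : (1 <= count_st op1 c0)%N by rewrite h1.
have := main_ind (R := R) _ n2 k c0 ha.
have WE : Wc c0 = (n - 1)%:R + (n.-1)%:R * Hs n :> R.
  have b0 : (count_st op2 c0 == 0%N) = false by rewrite h2 subn_eq0 leqNgt n2.
  by rewrite /Wc b0 /Vc h1 h3 /Af subr0.
have fn := final_num (R := R) n k n2 hk.
rewrite WE; lra.
Qed.
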